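(* Let $R$ be an associative ring with identity, let $a,b,c,y\in R$ and suppose that both $b$ and $c$ are regular. Then the following are equivalent: (i) $y$ is the $(b,c)$-inverse of $a$; (ii) $y$ is a hybrid $(b,c)$-inverse of $a$; (iii) $y$ is an annihilator $(b,c)$-inverse of $a$.
   Context: For $a,b,c\in R$, $y$ is the $(b,c)$-inverse of $a$ if $y\in (bRy)\cap(yRc)$, $yab=b$ and $cay=c$ (such $y$ is unique). $y$ is a hybrid $(b,c)$-inverse of $a$ if $yay=y$, $yR=bR$ and $r(y)=r(c)$. $y$ is an annihilator $(b,c)$-inverse of $a$ if $yay=y$, $l(y)=l(b)$ and $r(y)=r(c)$. Here $l(x)=\{z\in R:zx=0\}$, $r(x)=\{z\in R:xz=0\}$, $xR=\{xz:z\in R\}$. An element is regular if $x=xzx$ for some $z\in R$. *)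

(* Defs.v *)
From HB Require Import structures.
From mathcomp Require Import all_boot all_order all_algebra.
Set Implicit Arguments. Unset Strict Implicit. Unset Printing Implicit Defensive.
Import GRing.Theory.
Local Open Scope ring_scope.

(* R : pzRingType = associative ring with identity (zero ring allowed). *)

Definition regular {R : pzRingType} (x : R) : Prop := exists z : R, x = x * z * x.

(* l(x) = {z | z x = 0}, r(x) = {z | x z = 0}; equality of such sets = pointwise iff *)
Definition lann_eq {R : pzRingType} (x x' : R) : Prop :=
  forall z : R, z * x = 0 <-> z * x' = 0.
Definition rann_eq {R : pzRingType} (x x' : R) : Prop :=
  forall z : R, x * z = 0 <-> x' * z = 0.
Definition rideal_eq {R : pzRingType} (x x' : R) : Prop :=
  forall w : R, (exists z, w = x * z) <-> (exists z, w = x' * z).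

Definition bc_inverse {R : pzRingType} (a b c y : R) : Prop :=
  (exists s, y = b * s * y) /\ (exists t, y = y * t * c) /\
  y * a * b = b /\ c * a * y = c.

Definition hybrid_bc_inverse {R : pzRingType} (a b c y : R) : Prop :=
  y * a * y = y /\ rideal_eq y b /\ rann_eq y c.

Definition annihilator_bc_inverse {R : pzRingType} (a b c y : R) : Prop :=
  y * a * y = y /\ lann_eq y b /\ rann_eq y c.

(* Main.v *)
Require Import Defs.
From HB Require Import structures.
From mathcomp Require Import all_boot all_order all_algebra.
Local Open Scope ring_scope.
Import GRing.Theory.

Lemma zl (R : pzRingType) (u v : R) : u * v - v = (u - 1) * v.
Proof. by rewrite mulrBl mul1r. Qed.
Lemma zr (R : pzRingType) (u v : R) : u * v - u = u * (v - 1).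
Proof. by rewrite mulrBr mulr1. Qed.

Lemma i2h (R : pzRingType) (a b c y : R) :
  bc_inverse a b c y -> hybrid_bc_inverse a b c y.
Proof.
move=> [[s Hs] [[t Ht] [H1 H2]]].
have Hy : y * a * y = y by rewrite {2}Hs !mulrA H1 -Hs.
split=> //; split.
- move=> w; split=> [[z ->]|[z ->]].
  + by exists (s * y * z); rewrite {1}Hs !mulrA.
  + by exists (a * b * z); rewrite !mulrA H1.
- move=> z; split=> E.
  + by rewrite -H2 -mulrA E mulr0.
  + by rewrite Ht -!mulrA E !mulr0.
Qed.

Lemma h2i (R : pzRingType) (a b c y : R) (hc : regular c) :
  hybrid_bc_inverse a b c y -> bc_inverse a b c y.
Proof.
move=> [Hy [Hid Han]]; case: hc => w Hw.
have [v Hv] : exists v, y = b * v by apply/Hid; exists 1; rewrite mulr1.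
have [u Hu] : exists u, b = y * u by apply/Hid; exists 1; rewrite mulr1.
split; first by exists (v * a); rewrite -[in LHS]Hy {1}Hv !mulrA.
split.
  exists w; apply/eqP; rewrite eq_sym -subr_eq0 -mulrA zr; apply/eqP/Han.
  by rewrite mulrBr mulrA -Hw mulr1 subrr.
split; first by rewrite Hu !mulrA Hy.
apply/eqP; rewrite -subr_eq0 -mulrA zr; apply/eqP/Han.
by rewrite mulrBr mulrA Hy mulr1 subrr.
Qed.

Theorem theorem3p11 (R : pzRingType) (a b c y : R)
  (hb : regular b) (hc : regular c) :
  (bc_inverse a b c y <-> hybrid_bc_inverse a b c y) /\
  (hybrid_bc_inverse a b c y <-> annihilator_bc_inverse a b c y).
Proof.
split; first by split; [apply: i2h | apply: h2i].
split.
- move=> [Hy [Hid Han]]; split=> //; split=> // z.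
  have [v Hv] : exists v, y = b * v by apply/Hid; exists 1; rewrite mulr1.
  have [u Hu] : exists u, b = y * u by apply/Hid; exists 1; rewrite mulr1.
  split=> E; [by rewrite Hu mulrA E mul0r | by rewrite Hv mulrA E mul0r].
- move=> [Hy [Hl Han]]; split=> //; split=> // w.
  case: hb => x Hx.
  have E1 : y = b * x * y.
    apply/eqP; rewrite eq_sym -subr_eq0 zl; apply/eqP/Hl.
    by rewrite mulrBl -Hx mul1r subrr.
  have E2 : b = y * a * b.
    apply/eqP; rewrite eq_sym -subr_eq0 zl; apply/eqP/Hl.
    by rewrite mulrBl Hy mul1r subrr.
  split=> [[z ->]|[z ->]].
  + by exists (x * y * z); rewrite {1}E1 !mulrA.
  + by exists (a * b * z); rewrite {1}E2 !mulrA.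
Qed.
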